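(* Fix $\alpha\in(0,1/2)$ and $q_1,q_3\in(0,1)$, and define $m^*(3/4,3/4)=16\alpha$, $m^*(3/4,1/4)=m^*(1/4,3/4)=\frac{8(1-2\alpha)}{3}$, $m^*(1/4,1/4)=\frac{16\alpha}{9}$, $m^*=\frac{16(4\alpha+3)}{9}$, $\overline{q}^*=\frac{8\alpha+3}{8\alpha+6}$, $\overline{\lambda}^*=1/m^*$, $$\overline{q}=\frac{1}{m^*}\Big[\big(m^*(\tfrac34,\tfrac34)+m^*(\tfrac34,\tfrac14)\big)q_3+\big(m^*(\tfrac14,\tfrac34)+m^*(\tfrac14,\tfrac14)\big)q_1\Big],$$ $$\overline{\lambda}=\frac{1}{m^*}\Big(m^*(\tfrac34,\tfrac34)\tfrac{1-q_3}{4}+m^*(\tfrac34,\tfrac14)\tfrac{3(1-q_3)}{4}+m^*(\tfrac14,\tfrac34)\tfrac{1-q_1}{4}+m^*(\tfrac14,\tfrac14)\tfrac{3(1-q_1)}{4}\Big).$$ Suppose one of the following holds: (1) $\alpha=1/4$ and $6q_3+2q_1>5$; (2) $\alpha<1/4$ and $(q_1,q_3)\in\{q_1\ge 1/4,\ 6q_3+2q_1>5\}\cup\{q_1<1/4,\ (12\alpha+3)q_3+(3-4\alpha)q_1>8\alpha+3\}$; (3) $\alpha>1/4$ and $(q_1,q_3)\in\{q_1\le 1/4,\ 6q_3+2q_1>5\}\cup\{q_1>1/4,\ (12\alpha+3)q_3+(3-4\alpha)q_1>8\alpha+3\}$. Then $\overline{q}>\overline{q}^*$ and $\overline{\lamb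da}<\overline{\lambda}^*$.
   Context: Interpretation: $m^*(x,e)$ is the steady-state mass of type-$(x,e)$ users under the status quo (quality $q^*(x)=x$, churn probability $(1-q(x))(1-e)$ per period, inflow masses $\alpha,1/2-\alpha,1/2-\alpha,\alpha$ for types $(3/4,3/4),(3/4,1/4),(1/4,3/4),(1/4,1/4)$); $\overline{q},\overline{\lambda}$ are the one-period experimental ARQ and churn rate of the treatment with qualities $q_1$ (segment $x=1/4$) and $q_3$ (segment $x=3/4$); $\overline{q}^*,\overline{\lambda}^*$ are the status quo values. *)

(* Defs.v *)
From Stdlib Require Import Reals Lra.
Open Scope R_scope.

(* Steady-state masses m*(x,e) of the status quo, as given in the paper. *)
Definition m33 (alpha : R) : R := 16 * alpha.
Definition m31 (alpha : R) : R := 8 * (1 - 2 * alpha) / 3.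
Definition m13 (alpha : R) : R := 8 * (1 - 2 * alpha) / 3.
Definition m11 (alpha : R) : R := 16 * alpha / 9.
Definition mstar (alpha : R) : R := 16 * (4 * alpha + 3) / 9.

Definition qbar_star (alpha : R) : R := (8 * alpha + 3) / (8 * alpha + 6).
Definition lambdabar_star (alpha : R) : R := 1 / mstar alpha.

(* Experimental ARQ and churn rate with qualities q1 (x = 1/4), q3 (x = 3/4). *)
Definition qbar (alpha q1 q3 : R) : R :=
  (1 / mstar alpha) *
  ((m33 alpha + m31 alpha) * q3 + (m13 alpha + m11 alpha) * q1).

Definition lambdabar (alpha q1 q3 : R) : R :=
  (1 / mstar alpha) *
  (m33 alpha * ((1 - q3) / 4) + m31 alpha * (3 * (1 - q3) / 4)
   + m13 alpha * ((1 - q1) / 4) + m11 alpha * (3 * (1 - q1) / 4)).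

(* Main.v *)
Require Import Defs.
From Stdlib Require Import Reals Lra Psatz.
Open Scope R_scope.

Lemma key (alpha q1 q3 : R) :
  0 < alpha < 1 / 2 ->
  0 < q1 < 1 ->
  0 < q3 < 1 ->
  ( (alpha = 1 / 4 /\ 6 * q3 + 2 * q1 > 5)
    \/ (alpha < 1 / 4 /\
         ((q1 >= 1 / 4 /\ 6 * q3 + 2 * q1 > 5)
          \/ (q1 < 1 / 4 /\
              (12 * alpha + 3) * q3 + (3 - 4 * alpha) * q1 > 8 * alpha + 3)))
    \/ (alpha > 1 / 4 /\
         ((q1 <= 1 / 4 /\ 6 * q3 + 2 * q1 > 5)
          \/ (q1 > 1 / 4 /\
              (12 * alpha + 3) * q3 + (3 - 4 * alpha) * q1 > 8 * alpha + 3))) ) ->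
  (12 * alpha + 3) * q3 + (3 - 4 * alpha) * q1 - (8 * alpha + 3) > 0 /\
  6 * q3 + 2 * q1 - 5 > 0.
Proof.
  intros Ha H1 H3 H.
  remember (3*q3 - q1 - 2) as u eqn:Eu. remember (q3 + q1 - 1) as v eqn:Ev.
  assert (E1 : (12 * alpha + 3) * q3 + (3 - 4 * alpha) * q1 - (8 * alpha + 3)
               = 3*v + 4*alpha*u) by (rewrite Eu, Ev; ring).
  assert (E2 : 6 * q3 + 2 * q1 - 5 = u + 3*v) by (rewrite Eu, Ev; ring).
  rewrite E1, E2.
  destruct H as [[-> HL]|[[Hl [[Hq HL]|[Hq HP]]]|[Hl [[Hq HL]|[Hq HP]]]]].
  - split; lra.
  - split; [|lra].
    assert (0 < u + 3*v) by (lra).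
    assert (0 <= v) by lra.
    destruct (Rle_or_lt u 0) as [Hu|Hu].
    + assert (4*alpha*u >= u) by (assert ((1-4*alpha)*u <= 0) by nra; lra). lra.
    + assert (4*alpha*u > 0) by (apply Rmult_lt_0_compat; lra). lra.
  - assert (Hp : 3*v + 4*alpha*u > 0) by (nra).
    split; [lra|].
    destruct (Rle_or_lt u 0) as [Hu|Hu].
    + assert (v < 0) by (lra). nra.
    + nra.
  - split; [|lra].
    assert (0 < u + 3*v) by (lra).
    destruct (Rle_or_lt 0 u) as [Hu|Hu].
    * assert (4*alpha*u >= u) by nra. lra.
    * assert (v > 0) by lra.
      (* u<0 -> q3 < (2+q1)/3 ; contradict with 6q3+2q1>5 and q1<=1/4 *)
      exfalso. lra.
  - assert (Hp : 3*v + 4*alpha*u > 0) by (nra).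
    split; [lra|].
    destruct (Rle_or_lt 0 u) as [Hu|Hu].
    + assert (v > 0) by (lra). nra.
    + nra.
Qed.

Theorem corollary1 (alpha q1 q3 : R) :
  0 < alpha < 1 / 2 ->
  0 < q1 < 1 ->
  0 < q3 < 1 ->
  ( (alpha = 1 / 4 /\ 6 * q3 + 2 * q1 > 5)
    \/ (alpha < 1 / 4 /\
         ((q1 >= 1 / 4 /\ 6 * q3 + 2 * q1 > 5)
          \/ (q1 < 1 / 4 /\
              (12 * alpha + 3) * q3 + (3 - 4 * alpha) * q1 > 8 * alpha + 3)))
    \/ (alpha > 1 / 4 /\
         ((q1 <= 1 / 4 /\ 6 * q3 + 2 * q1 > 5)
          \/ (q1 > 1 / 4 /\
              (12 * alpha + 3) * q3 + (3 - 4 * alpha) * q1 > 8 * alpha + 3))) ) ->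
  qbar alpha q1 q3 > qbar_star alpha /\
  lambdabar alpha q1 q3 < lambdabar_star alpha.
Proof.
  intros Ha H1 H3 H.
  destruct (key alpha q1 q3 Ha H1 H3 H) as [P L].
  assert (Hm : 4*alpha + 3 > 0) by lra.
  assert (D1 : qbar alpha q1 q3 - qbar_star alpha =
     ((12 * alpha + 3) * q3 + (3 - 4 * alpha) * q1 - (8 * alpha + 3)) / (2*(4*alpha+3))).
  { unfold qbar, qbar_star, mstar, m33, m31, m13, m11. field. lra. }
  assert (D2 : lambdabar_star alpha - lambdabar alpha q1 q3 =
     (6 * q3 + 2 * q1 - 5) * (3 / (16 * (4*alpha+3)))).
  { unfold lambdabar, lambdabar_star, mstar, m33, m31, m13, m11. field. lra. }
  split.
  - assert (0 < ((12 * alpha + 3) * q3 + (3 - 4 * alpha) * q1 - (8 * alpha + 3)) / (2*(4*alpha+3))).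
    { apply Rdiv_lt_0_compat; lra. }
    lra.
  - assert (0 < 3 / (16 * (4*alpha+3))) by (apply Rdiv_lt_0_compat; lra).
    assert (0 < (6 * q3 + 2 * q1 - 5) * (3 / (16 * (4*alpha+3)))) by (apply Rmult_lt_0_compat; lra).
    lra.
Qed.
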